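(* Let $V$ be a vector space of dimension $2r$ ($r\ge1$) over $\mathbb{F}_2$ with nondegenerate quadratic form $Q$. (i) If $Q$ is hyperbolic and $r\equiv 0$ or $1\pmod 4$, then $V$ has a symmetric basis. (ii) If $Q$ is elliptic and $r\equiv 2$ or $3\pmod 4$, then $V$ has a symmetric basis.
   Context: The associated bilinear form of $Q$ is $B(u,v)=Q(u+v)-Q(u)-Q(v)$, and $Q$ is nondegenerate if $B$ is. $Q$ on a $2r$-dimensional space is hyperbolic if $V$ has a basis $e_1,\dots,e_r,f_1,\dots,f_r$ with $Q(e_i)=Q(f_i)=0$, $B(e_i,e_j)=B(f_i,f_j)=0$, $B(e_i,f_j)=\delta_{ij}$; it is elliptic if $V$ has a basis $e_1,\dots,e_{r-1},f_1,\dots,f_{r-1},x,y$ with the same relations among the $e_i,f_i$, all $e_i,f_i$ orthogonal to $x,y$, $Q(x)=1$, $B(x,y)=1$, $Q(y)=\zeta$ where $X^2+X+\zeta$ is irreducible over $\mathbb{F}_2$ (i.e. $\zeta=1$). A basis $\{v_1,\dots,v_{2r}\}$ is symmetric if $Q(v_i)=0$ for all $i$ and $B(v_i,v_j)=1$ for all $i\neq j$. *)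

(* Defs.v *)
From HB Require Import structures.
From mathcomp Require Import all_boot all_order all_algebra.
Set Implicit Arguments. Unset Strict Implicit. Unset Printing Implicit Defensive.
Import GRing.Theory.
Local Open Scope ring_scope.

Section QF.
Variable V : vectType 'F_2.

Definition polar (Q : V -> 'F_2) (u v : V) : 'F_2 := Q (u + v) - Q u - Q v.

Definition is_quadratic_form (Q : V -> 'F_2) : Prop :=
  [/\ forall (a : 'F_2) (v : V), Q (a *: v) = a ^+ 2 * Q v,
      forall u w v : V, polar Q (u + w) v = polar Q u v + polar Q w v,
      forall (a : 'F_2) (u v : V), polar Q (a *: u) v = a * polar Q u v,
      forall u v w : V, polar Q u (v + w) = polar Q u v + polar Q u w
    & forall (a : 'F_2) (u v : V), polar Q u (a *: v) = a * polar Q u v].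

Definition nondegenerate_qf (Q : V -> 'F_2) : Prop :=
  forall u : V, (forall v : V, polar Q u v = 0) -> u = 0.

Definition hyperbolic_qf (r : nat) (Q : V -> 'F_2) : Prop :=
  exists e f : 'I_r -> V,
    [/\ basis_of fullv ([seq e i | i <- enum 'I_r] ++ [seq f i | i <- enum 'I_r]),
        forall i, Q (e i) = 0 /\ Q (f i) = 0,
        forall i j, polar Q (e i) (e j) = 0 /\ polar Q (f i) (f j) = 0
      & forall i j, polar Q (e i) (f j) = (i == j)%:R].

(* elliptic on a 2r-dimensional space (zeta = 1 over F_2) *)
Definition elliptic_qf (r : nat) (Q : V -> 'F_2) : Prop :=
  exists (e f : 'I_r.-1 -> V) (x y : V),
    [/\ basis_of fullv ([seq e i | i <- enum 'I_r.-1] ++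
                        [seq f i | i <- enum 'I_r.-1] ++ [:: x; y]),
        forall i, Q (e i) = 0 /\ Q (f i) = 0,
        forall i j, polar Q (e i) (e j) = 0 /\ polar Q (f i) (f j) = 0,
        forall i j, polar Q (e i) (f j) = (i == j)%:R
      & forall i, [/\ polar Q (e i) x = 0, polar Q (e i) y = 0,
                      polar Q (f i) x = 0 & polar Q (f i) y = 0]] /\
    [/\ Q x = 1, polar Q x y = 1 & Q y = 1].

Definition has_symmetric_basis (n : nat) (Q : V -> 'F_2) : Prop :=
  exists v : 'I_n -> V,
    [/\ basis_of fullv [seq v i | i <- enum 'I_n],
        forall i, Q (v i) = 0
      & forall i j, i != j -> polar Q (v i) (v j) = 1].

End QF.

(* Main.v *)
Require Import Defs.
From HB Require Import structures.
From mathcomp Require Import all_boot all_order all_algebra zify ring.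
Local Open Scope ring_scope.
Import GRing.Theory.
Set Implicit Arguments. Unset Strict Implicit.

Lemma F2_add_same (x : 'F_2) : x + x = 0.
Proof. by case: x => [[|[|]]] // ?; apply/eqP. Qed.

Lemma F2_two : (2%:R : 'F_2) = 0. Proof. by apply/eqP. Qed.

Lemma natF2 k : (k%:R : 'F_2) = ((k %% 2)%N == 1%N)%:R.
Proof.
rewrite -(@Fp_nat_mod 2) //.
have : (k %% 2 < 2)%N by rewrite ltn_mod.
by case: (k %% 2)%N => [|[|]] //= _; apply/eqP.
Qed.

Section Dummy. End Dummy.

Lemma Q0 (V : vectType 'F_2) (Q : V -> 'F_2) : is_quadratic_form Q -> Q 0 = 0.
Proof. case=> HZ _ _ _ _; have := HZ 0 0; rewrite scale0r => ->; by rewrite expr0n mul0r. Qed.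

Lemma QD (V : vectType 'F_2) (Q : V -> 'F_2) u v : Q (u + v) = Q u + Q v + polar Q u v.
Proof. rewrite /polar; ring. Qed.

Lemma polarC (V : vectType 'F_2) (Q : V -> 'F_2) u v : polar Q u v = polar Q v u.
Proof. rewrite /polar (addrC u v); ring. Qed.

Lemma polar_self (V : vectType 'F_2) (Q : V -> 'F_2) : is_quadratic_form Q -> forall u, polar Q u u = 0.
Proof.
move=> HQ u; rewrite /polar.
have -> : u + u = 0 by rewrite -mulr2n -scaler_nat F2_two scale0r.
by rewrite (Q0 HQ) sub0r -opprD F2_add_same oppr0.
Qed.

Lemma polarDl (V : vectType 'F_2) (Q : V -> 'F_2) : is_quadratic_form Q ->
  forall u w v, polar Q (u + w) v = polar Q u v + polar Q w v.
Proof. by case. Qed.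

Lemma polarDr (V : vectType 'F_2) (Q : V -> 'F_2) : is_quadratic_form Q ->
  forall u v w, polar Q u (v + w) = polar Q u v + polar Q u w.
Proof. by case. Qed.

Lemma polarZl (V : vectType 'F_2) (Q : V -> 'F_2) : is_quadratic_form Q ->
  forall a u v, polar Q (a *: u) v = a * polar Q u v.
Proof. by case. Qed.

Lemma polar0l (V : vectType 'F_2) (Q : V -> 'F_2) : is_quadratic_form Q ->
  forall v, polar Q 0 v = 0.
Proof. move=> HQ v; have := polarZl HQ 0 0 v; by rewrite scale0r mul0r. Qed.

Lemma polar_suml (V : vectType 'F_2) (Q : V -> 'F_2) : is_quadratic_form Q ->
  forall (I : Type) (r : seq I) (P : pred I) (F : I -> V) v,
  polar Q (\sum_(i <- r | P i) F i) v = \sum_(i <- r | P i) polar Q (F i) v.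
Proof.
move=> HQ I r P F v.
apply: (big_morph (fun u => polar Q u v)); [move=> a b; exact: (polarDl HQ) | exact: polar0l].
Qed.

Definition zz (V : vectType 'F_2) (x y : nat -> V) (c : bool) (a : nat) := if c then y a else x a.
Definition SS (V : vectType 'F_2) (x y : nat -> V) (k : nat) := \sum_(j < k) (x j + y j).
Definition vsym (V : vectType 'F_2) (x y : nat -> V) (i : nat) :=
  zz x y (odd i) i./2 + SS x y i./2.

Lemma lemA (V : vectType 'F_2) (Q : V -> 'F_2) (r : nat) (x y : nat -> V) :
  is_quadratic_form Q ->
  (forall k l, (k < r)%N -> (l < r)%N -> k != l ->
     [/\ polar Q (x k) (x l) = 0, polar Q (x k) (y l) = 0 & polar Q (y k) (y l) = 0]) ->
  (forall k, (k < r)%N -> polar Q (x k) (y k) = 1) ->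
  (forall k, (k < r)%N -> Q (x k) = k%:R /\ Q (y k) = k%:R) ->
  (forall i, (i < 2 * r)%N -> Q (vsym x y i) = 0) /\
  (forall i j, (i < 2 * r)%N -> (j < 2 * r)%N -> i != j -> polar Q (vsym x y i) (vsym x y j) = 1).
Proof.
move=> HQ H1 H2 H3.
pose s j := x j + y j.
have Pdl := polarDl HQ; have Pdr := polarDr HQ.
have Fzz : forall c c' a b, (a < r)%N -> (b < r)%N ->
    polar Q (zz x y c a) (zz x y c' b) = ((a == b) && (c != c'))%:R.
  move=> c c' a b ar br; case: (eqVneq a b) => [<-|ab] /=.
    rewrite /zz; case: c; case: c' => /=; rewrite ?polar_self //.
      by rewrite polarC H2.
    by rewrite H2.
  have [h1 h2 h3] := H1 _ _ ar br ab.
  have ba : b != a by rewrite eq_sym.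
  have [g1 g2 g3] := H1 _ _ br ar ba.
  rewrite /zz; case: c; case: c' => //=.
  by rewrite polarC.
have Fzs : forall c a b, (a < r)%N -> (b < r)%N ->
    polar Q (zz x y c a) (s b) = (a == b)%:R.
  move=> c a b ar br; rewrite /s Pdr.
  have := Fzz c false a b ar br; rewrite /zz => ->.
  have := Fzz c true a b ar br; rewrite /zz => ->.
  by case: (a == b); case: c => /=; rewrite ?addr0 ?add0r.
have Fss : forall a b, (a < r)%N -> (b < r)%N -> polar Q (s a) (s b) = 0.
  move=> a b ar br; rewrite {1}/s Pdl.
  have := Fzs false a b ar br; rewrite /zz => ->.
  have := Fzs true a b ar br; rewrite /zz => ->.
  exact: F2_add_same.
have FzS : forall c a k, (a < r)%N -> (k <= r)%N ->
    polar Q (zz x y c a) (SS x y k) = (a < k)%:R.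
  move=> c a; elim=> [|k IH] ar kr.
    by rewrite /SS big_ord0 polarC polar0l.
  rewrite /SS big_ord_recr /= Pdr.
  rewrite -/(SS x y k) IH ?(ltnW kr) // Fzs //.
  case: (eqVneq a k) => [->|ak] /=.
    by rewrite ltnn ltnSn add0r.
  by rewrite addr0 [in RHS]ltnS [in RHS]leq_eqVlt (negbTE ak).
have FsS : forall a k, (a < r)%N -> (k <= r)%N -> polar Q (s a) (SS x y k) = 0.
  move=> a k ar kr; rewrite {1}/s Pdl.
  have := FzS false a k ar kr; rewrite /zz => ->.
  have := FzS true a k ar kr; rewrite /zz => ->.
  exact: F2_add_same.
have FSS : forall k l, (k <= r)%N -> (l <= r)%N -> polar Q (SS x y k) (SS x y l) = 0.
  move=> k; elim=> [|l IH] kr lr.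
    by rewrite /SS big_ord0 polarC polar0l.
  rewrite {2}/SS big_ord_recr /= Pdr -/(SS x y l) IH ?(ltnW lr) //.
  by rewrite polarC FsS // add0r.
have QS : forall k, (k <= r)%N -> Q (SS x y k) = k%:R.
  elim=> [|k IH] kr.
    by rewrite /SS big_ord0 (Q0 HQ).
  rewrite /SS big_ord_recr /= QD -/(SS x y k) IH ?(ltnW kr) //.
  rewrite polarC FsS ?(ltnW kr) // addr0 QD.
  have [-> ->] := H3 _ kr; rewrite H2 // F2_add_same add0r.
  by rewrite [RHS]mulrSr.
have half_lt : forall i, (i < 2 * r)%N -> (i./2 < r)%N.
  by move=> i; rewrite ltn_half_double -mul2n.
split.
  move=> i ir; have ai := half_lt _ ir.
  rewrite /vsym QD (FzS _ _ _ ai (ltnW ai)) ltnn addr0 (QS _ (ltnW ai)).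
  have [h1 h2] := H3 _ ai.
  by rewrite /zz; case: (odd i); rewrite ?h1 ?h2 F2_add_same.
move=> i j ir jr ij.
have ai := half_lt _ ir; have aj := half_lt _ jr.
rewrite /vsym !Pdl !Pdr (Fzz _ _ _ _ ai aj) (FzS _ _ _ ai (ltnW aj)).
rewrite [polar Q (SS _ _ _) _]polarC (FzS _ _ _ aj (ltnW ai)) (FSS _ _ (ltnW ai) (ltnW aj)) addr0.
case: (ltngtP i./2 j./2) => h /=.
- by rewrite add0r addr0.
- by rewrite add0r add0r.
- rewrite !addr0.
  have -> : odd i != odd j.
    apply/negP => /eqP hij; move/negP: ij; apply; apply/eqP.
    by rewrite -(odd_double_half i) -(odd_double_half j) hij h.
  done.
Qed.
Lemma sym_basis (V : vectType 'F_2) (Q : V -> 'F_2) (n : nat) (v : 'I_n -> V) :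
  is_quadratic_form Q -> ~~ odd n -> \dim (fullv : {vspace V}) = n ->
  (forall i j, i != j -> polar Q (v i) (v j) = 1) ->
  basis_of fullv [seq v i | i <- enum 'I_n].
Proof.
move=> HQ ev dimn Hp.
have Hs : [seq v i | i <- enum 'I_n] = mktuple v :> seq V by [].
rewrite basisEfree; apply/and3P; split; last first.
- by rewrite size_map size_enum_ord dimn.
- exact: subvf.
rewrite Hs; apply/freeP => k Hk.
have key : forall j, k j = \sum_(i < n) k i.
  move=> j.
  have := congr1 (fun u => polar Q u (v j)) Hk; rewrite /= polar_suml // polar0l //.
  rewrite (eq_bigr (fun i => k i * (i != j)%:R)); last first.
    move=> i _; rewrite polarZl // nth_mktuple.
    case: (eqVneq i j) => [->|ij]; first by rewrite polar_self.
    by rewrite Hp.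
  rewrite (bigD1 j) //= eqxx mulr0 add0r => H0.
  rewrite (bigD1 j) //= (eq_bigr (fun i => k i * (i != j)%:R)); last first.
    by move=> i ->; rewrite mulr1.
  by rewrite H0 addr0.
have K0 : \sum_(i < n) k i = 0.
  rewrite (eq_bigr (fun _ => \sum_(i < n) k i)); last by move=> i _; exact: key.
  rewrite sumr_const card_ord.
  set K := \sum_(i < n) k i.
  have -> : n = (n./2 * 2)%N by rewrite muln2 -[LHS](odd_double_half n) (negbTE ev) add0n.
  rewrite mulrnA mulr2n.
  exact: F2_add_same.
by move=> i; rewrite key K0.
Qed.

Definition xB (V : vectType 'F_2) (p q : nat -> V) (s k : nat) : V :=
  if ((k %% 2 == 0) || (k == s))%N then p k
  else if (k %% 4 == 1)%N then p k + q k else p (k - 2)%N + q (k - 2)%N + p k.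
Definition yB (V : vectType 'F_2) (p q : nat -> V) (s k : nat) : V :=
  if ((k %% 2 == 0) || (k == s))%N then q k
  else if (k %% 4 == 1)%N then p k + p (k + 2)%N + q (k + 2)%N
  else p (k - 2)%N + q (k - 2)%N + q k.

Ltac fin := first [ by apply/eqP | (exfalso; lia) |
  match goal with |- context [(?a == ?b)%N] => case: (a =P b) => ?; fin end ].

Lemma lemB (V : vectType 'F_2) (Q : V -> 'F_2) (r s : nat) (p q : nat -> V) :
  is_quadratic_form Q ->
  ((r %% 4 <= 1 /\ s = r) \/ (r %% 4 = 2 /\ s + 1 = r) \/ (r %% 4 = 3 /\ s + 2 = r))%N ->
  (forall j k, (j < r)%N -> (k < r)%N -> polar Q (p j) (p k) = 0) ->
  (forall j k, (j < r)%N -> (k < r)%N -> polar Q (q j) (q k) = 0) ->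
  (forall j k, (j < r)%N -> (k < r)%N -> polar Q (p j) (q k) = (j == k)%:R) ->
  (forall k, (k < r)%N -> Q (p k) = (k == s)%:R /\ Q (q k) = (k == s)%:R) ->
  [/\ (forall k l, (k < r)%N -> (l < r)%N -> k != l ->
     [/\ polar Q (xB p q s k) (xB p q s l) = 0, polar Q (xB p q s k) (yB p q s l) = 0
       & polar Q (yB p q s k) (yB p q s l) = 0]),
    (forall k, (k < r)%N -> polar Q (xB p q s k) (yB p q s k) = 1) &
    (forall k, (k < r)%N -> Q (xB p q s k) = k%:R /\ Q (yB p q s k) = k%:R)].
Proof.
move=> HQ Hr Hpp Hqq Hpq HQpq.
have Hqp : forall j k, (j < r)%N -> (k < r)%N -> polar Q (q j) (p k) = (j == k)%:R.
  by move=> j k jr kr; rewrite polarC Hpq // eq_sym.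
have HQp : forall k, (k < r)%N -> Q (p k) = (k == s)%:R by move=> k /HQpq [].
have HQq : forall k, (k < r)%N -> Q (q k) = (k == s)%:R by move=> k /HQpq [].
have Pdl := polarDl HQ; have Pdr := polarDr HQ.
split.
- move=> k l kr lr /eqP kl; rewrite /xB /yB; split;
  repeat (case: ifP => ?); try (exfalso; lia);
  rewrite ?Pdl ?Pdr ?Hpp ?Hqq ?Hpq ?Hqp; try lia; fin.
- move=> k kr; rewrite /xB /yB;
  repeat (case: ifP => ?); try (exfalso; lia);
  rewrite ?Pdl ?Pdr ?Hpp ?Hqq ?Hpq ?Hqp; try lia; fin.
- move=> k kr; rewrite natF2 /xB /yB; split;
  repeat (case: ifP => ?); try (exfalso; lia);
  rewrite ?QD ?Pdl ?Pdr ?Hpp ?Hqq ?Hpq ?Hqp ?HQp ?HQq; try lia; fin.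
Qed.

Unset Implicit Arguments.

Lemma final (V : vectType 'F_2) (Q : V -> 'F_2) (r s : nat) (p q : nat -> V) :
  is_quadratic_form Q -> \dim (fullv : {vspace V}) = (2 * r)%N ->
  ((r %% 4 <= 1 /\ s = r) \/ (r %% 4 = 2 /\ s + 1 = r) \/ (r %% 4 = 3 /\ s + 2 = r))%N ->
  (forall j k, (j < r)%N -> (k < r)%N -> polar Q (p j) (p k) = 0) ->
  (forall j k, (j < r)%N -> (k < r)%N -> polar Q (q j) (q k) = 0) ->
  (forall j k, (j < r)%N -> (k < r)%N -> polar Q (p j) (q k) = (j == k)%:R) ->
  (forall k, (k < r)%N -> Q (p k) = (k == s)%:R /\ Q (q k) = (k == s)%:R) ->
  has_symmetric_basis (2 * r) Q.
Proof.
move=> HQ dimV Hr Hpp Hqq Hpq HQpq.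
have [H1 H2 H3] := lemB HQ Hr Hpp Hqq Hpq HQpq.
have [QA PA] := lemA HQ H1 H2 H3.
pose v := fun i : 'I_(2 * r) => vsym (xB p q s) (yB p q s) i.
have Hv : forall i j : 'I_(2 * r), i != j -> polar Q (v i) (v j) = 1.
  move=> i j ij; exact: (PA i j (ltn_ord i) (ltn_ord j) ij).
exists v; split.
- apply: (sym_basis HQ _ dimV Hv).
  by rewrite oddM.
- move=> i; exact: (QA i (ltn_ord i)).
- exact: Hv.
Qed.

Theorem lemma3p3 (r : nat) (V : vectType 'F_2) (Q : V -> 'F_2) :
  (1 <= r)%N -> \dim (fullv : {vspace V}) = (2 * r)%N ->
  is_quadratic_form Q -> nondegenerate_qf Q ->
  (hyperbolic_qf r Q -> (r %% 4 = 0 \/ r %% 4 = 1)%N -> has_symmetric_basis (2 * r) Q) /\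
  (elliptic_qf r Q -> (r %% 4 = 2 \/ r %% 4 = 3)%N -> has_symmetric_basis (2 * r) Q).
Proof.
move=> r1 dimV HQ _; split.
- move=> [e [f [_ He Hee Hef]]] Hr.
  case: r r1 dimV e f He Hee Hef Hr => [//|r'] _ dimV e f He Hee Hef Hr.
  have inj : forall j k, (j < r'.+1)%N -> (k < r'.+1)%N ->
      ((inord j : 'I_r'.+1) == inord k) = (j == k).
    by move=> j k jr kr; rewrite -(inj_eq val_inj) /= !inordK.
  apply: (@final V Q r'.+1 r'.+1 (fun j => e (inord j)) (fun j => f (inord j))) => //.
  + lia.
  + by move=> j k _ _; case: (Hee (inord j) (inord k)).
  + by move=> j k _ _; case: (Hee (inord j) (inord k)).
  + by move=> j k jr kr; rewrite Hef inj.
  + move=> k kr; have [-> ->] := He (inord k).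
    by have -> : (k == r'.+1) = false by apply/negbTE; rewrite neq_ltn kr.
- move=> [e [f [x0 [y0 [[_ He Hee Hef Hxy] [Qx Bxy Qy]]]]]] Hr.
  case: r r1 dimV e f He Hee Hef Hxy Hr => [//|[|r']] _ dimV e f He Hee Hef Hxy Hr.
    exfalso; lia.
  have [s [Hs1 Hs2]] : exists s, (s + 1 = r'.+2 \/ s + 2 = r'.+2)%N /\
      ((r'.+2 %% 4 = 2 /\ s + 1 = r'.+2) \/ (r'.+2 %% 4 = 3 /\ s + 2 = r'.+2))%N.
    case: Hr => Hr; [exists r'.+1 | exists r']; lia.
  pose g j := if (j == r'.+1)%N then r' else j.
  have gr : forall j, (j < r'.+2)%N -> j != s -> (g j < r'.+1)%N.
    move=> j jr /eqP js; rewrite /g; case: eqP => ?; lia.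
  have ginj : forall j k, (j < r'.+2)%N -> (k < r'.+2)%N -> j != s -> k != s ->
      ((inord (g j) : 'I_r'.+1) == inord (g k)) = (j == k).
    move=> j k jr kr js ks; rewrite -(inj_eq val_inj) /= !inordK ?gr //.
    move/eqP: js => js; move/eqP: ks => ks; rewrite /g.
    case: (j =P r'.+1) => ?; case: (k =P r'.+1) => ?; case: (j =P k) => ?;
      first [done | (apply/eqP; lia) | (apply/negbTE/eqP; lia)].
  clearbody g.
  pose p j := if (j == s) then x0 else e (inord (g j)).
  pose q j := if (j == s) then y0 else f (inord (g j)).
  apply: (@final V Q r'.+2 s p q) => //.
  + lia.
  + move=> j k jr kr; rewrite /p; do 2 case: eqP => ?; rewrite ?polar_self //.
    * by case: (Hxy (inord (g k))) => *; rewrite polarC.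
    * by case: (Hxy (inord (g j))).
    * by case: (Hee (inord (g j)) (inord (g k))).
  + move=> j k jr kr; rewrite /q; do 2 case: eqP => ?; rewrite ?polar_self //.
    * by case: (Hxy (inord (g k))) => *; rewrite polarC.
    * by case: (Hxy (inord (g j))).
    * by case: (Hee (inord (g j)) (inord (g k))).
  + move=> j k jr kr; rewrite /p /q; case: (eqVneq j s) => js; case: (eqVneq k s) => ks.
    * by rewrite js ks eqxx Bxy.
    * case: (Hxy (inord (g k))) => _ _ h _; rewrite polarC h.
      by have -> : (j == k) = false by apply/negbTE; rewrite js eq_sym.
    * case: (Hxy (inord (g j))) => _ h _ _; rewrite h.
      by have -> : (j == k) = false by apply/negbTE; rewrite ks.
    * by rewrite Hef ginj.
  + move=> k kr; rewrite /p /q; case: (eqVneq k s) => ks.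
    * by rewrite /= Qx Qy.
    * by have [-> ->] := He (inord (g k)).
Qed.
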